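(* Let $k\ge 3$ and $n>3$. Protocol 3 (Cross-edges Tree), run on $n$ nodes with one node initially in $L_0$ and the others in $F$, never stabilises with isolated nodes: in every stable configuration reached by a fair execution, every node belongs to the leader's connected component (in particular no node remains in state $F$).
   Context: Network constructor model: $n$ nodes, every pair may interact; node states from a finite set; each node pair has an edge state in $\{0,1\}$, initially $0$. At each step a pair of nodes is selected and updated according to the transition rules (either ordering of the pair); unlisted triples are unchanged. A configuration is stable if no listed rule is applicable to any pair of nodes. An infinite execution is fair if whenever a configuration $C$ occurs infinitely often, every configuration reachable from $C$ in one step occurs infinitely often. Protocol 3 (Cross-edges Tree), for a parameter $k$: $Q=\{F,L_0,\dots,L_k,O_0,\dots,O_k\}$, rules $(L_x,F,0)\to(L_{x+1},O_0,1)$ for $x<k$; $(O_y,F,0)\to(O_{y+1},O_0,1)$ for $y<k$; $(L_x,O_y,0)\to(L_{x+1},O_{y+1},1)$ for $x,y<k-1$; $(O_y,O_z,0)\to(O_{y+1},O_{z+1},1)$ for $y,z<k-1$. *)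

(* Defs.v *)
From mathcomp Require Import all_boot.
Set Implicit Arguments. Unset Strict Implicit. Unset Printing Implicit Defensive.

(* Node states of Protocol 3: F, L_x, O_y (indices as nat; from the initial
   configuration only indices <= k are ever reached). *)
Inductive st := SF | SL of nat | SO of nat.

(* Transition rules of Protocol 3 (Cross-edges Tree) with parameter k.
   [rule k a b e] is [Some (a',b',e')] iff (a,b,e) -> (a',b',e') is listed. *)
Definition rule (k : nat) (a b : st) (e : bool) : option (st * st * bool) :=
  if e then None else
  match a, b with
  | SL x, SF => if x < k then Some (SL x.+1, SO 0, true) else None
  | SO y, SF => if y < k then Some (SO y.+1, SO 0, true) else None
  | SL x, SO y => if (x < k - 1) && (y < k - 1)
                  then Some (SL x.+1, SO y.+1, true) else None
  | SO y, SO z => if (y < k - 1) && (z < k - 1)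
                  then Some (SO y.+1, SO z.+1, true) else None
  | _, _ => None
  end.

(* A configuration: node states and edge states (edge state of {u,v} stored
   symmetrically at (u,v) and (v,u)). *)
Record config (n : nat) := Config {
  cst : {ffun 'I_n -> st};
  ced : {ffun 'I_n * 'I_n -> bool} }.

(* Interaction of the selected pair (u,v) with u as first component of the rule;
   the other ordering is covered by selecting (v,u). Unlisted triples: no change. *)
Definition interact (k n : nat) (u v : 'I_n) (C : config n) : config n :=
  match rule k (cst C u) (cst C v) (ced C (u, v)) with
  | Some (a, b, e) =>
      Config [ffun w => if w == u then a else if w == v then b else cst C w]
             [ffun p => if (p == (u, v)) || (p == (v, u)) then e else ced C p]
  | None => C
  end.

Definition step (k n : nat) (C C' : config n) : Prop :=
  exists u v : 'I_n, u != v /\ C' = interact k u v C.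

Definition stable (k n : nat) (C : config n) : Prop :=
  forall u v : 'I_n, u != v -> rule k (cst C u) (cst C v) (ced C (u, v)) = None.

Definition init (n : nat) (l : 'I_n) : config n :=
  Config [ffun w => if w == l then SL 0 else SF] [ffun _ => false].

Definition infinitely_often (n : nat) (ex : nat -> config n) (C : config n) : Prop :=
  forall m, exists t, m <= t /\ ex t = C.

Definition execution (k n : nat) (l : 'I_n) (ex : nat -> config n) : Prop :=
  ex 0 = init l /\ forall t, step k (ex t) (ex t.+1).

Definition fair (k n : nat) (ex : nat -> config n) : Prop :=
  forall C C', infinitely_often ex C -> step k C C' -> infinitely_often ex C'.

Definition active (n : nat) (C : config n) : rel 'I_n :=
  [rel u v | ced C (u, v)].

(* Main.v *)
Require Import Defs.
From mathcomp Require Import all_boot.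
From mathcomp Require Import zify.
Set Implicit Arguments. Unset Strict Implicit.

Definition unsat (k : nat) (s : st) : bool :=
  match s with SF => false | SL x => x < k | SO x => x < k end.

Lemma rule_spec k s1 s2 e0 a b e : rule k s1 s2 e0 = Some (a, b, e) ->
  [/\ e0 = false, e = true, s1 <> SF, a <> SF & b <> SF] /\ (unsat k a || unsat k b).
Proof.
case: e0 => //=.
case: s1 => [|x|x]; case: s2 => [|y|y] //=.
- case: ifP => // H [<- <- <-]; split => //=; apply/orP; right.
  by apply: leq_ltn_trans H.
- case: ifP => // /andP [H1 H2] [<- <- <-]; split => //=; apply/orP; left.
  by move: H1; clear; lia.
- case: ifP => // H [<- <- <-]; split => //=; apply/orP; right.
  by apply: leq_ltn_trans H.
- case: ifP => // /andP [H1 H2] [<- <- <-]; split => //=; apply/orP; left.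
  by move: H1; clear; lia.
Qed.

Definition Inv (k : nat) {n : nat} (l : 'I_n) (C : config n) : Prop :=
  [/\ cst C l <> SF,
      (forall p q, ced C (p, q) -> cst C p <> SF /\ cst C q <> SF),
      (forall w, cst C w <> SF -> connect (active C) l w) &
      ((exists f, cst C f = SF) -> exists w, unsat k (cst C w))].

Lemma Inv_step k n (l : 'I_n) (C C' : config n) : Inv k l C -> step k C C' -> Inv k l C'.
Proof.
move=> [Hl HE HC HU] [u [v [Huv ->]]].
rewrite /interact.
case Hr: (rule k (cst C u) (cst C v) (ced C (u, v))) => [[[a b] e]|]; last by split.
have [[He0 He Hu Ha Hb] Hab] := rule_spec Hr.
subst e.
have Hst : forall w, cst C w <> SF ->
  [ffun w0 => if w0 == u then a else if w0 == v then b else cst C w0] w <> SF.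
  by move=> w Hw; rewrite ffunE; case: ifP => _ //; case: ifP.
have Hmono : forall p, ced C p ->
  [ffun p0 => if (p0 == (u, v)) || (p0 == (v, u)) then true else ced C p0] p.
  by move=> p Hp; rewrite ffunE Hp; case: ifP.
set D := Config _ _.
have Hlift : forall w, connect (active C) l w -> connect (active D) l w.
  move=> w; apply: connect_sub => x y /= Hxy; apply: connect1 => /=.
  exact: Hmono.
split.
- exact: Hst.
- move=> p q /=; rewrite ffunE.
  have Hw2 : forall w, (w == u) || (w == v) ->
    [ffun w0 => if w0 == u then a else if w0 == v then b else cst C w0] w <> SF.
    move=> w; rewrite ffunE; case: ifP => // _; case: ifP => //.
  case: ifP => [/orP [] /eqP [-> ->] _| _ /HE [H1 H2]].
  + by split; apply: Hw2; rewrite eqxx ?orbT.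
  + by split; apply: Hw2; rewrite eqxx ?orbT.
  + by split; apply: Hst.
- move=> w /=; rewrite ffunE.
  case: (eqVneq w u) => [->|Hwu] Hw; first by apply: Hlift; apply: HC.
  case: (eqVneq w v) Hw => [->|Hwv] /= Hw; last by apply: Hlift; apply: HC.
  apply: (connect_trans (Hlift u (HC u Hu))); apply: connect1 => /=.
  by rewrite /active /= ffunE eqxx.
- move=> [f /=]; rewrite ffunE.
  case: ifP => [_ //|_]; case: ifP => [_ //|_] Hf.
  have [w Hw] := HU (ex_intro _ f Hf).
  case: (eqVneq w u) => [Hwu|Hwu]; last case: (eqVneq w v) => [Hwv|Hwv].
  + case/orP: Hab => H; [exists u | exists v]; rewrite /= ffunE ?eqxx //.
    by rewrite eq_sym (negbTE Huv).
  + case/orP: Hab => H; [exists u | exists v]; rewrite /= ffunE ?eqxx //.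
    by rewrite eq_sym (negbTE Huv).
  + by exists w; rewrite /= ffunE (negbTE Hwu) (negbTE Hwv).
Qed.

Theorem corollary1 (k n : nat) (l : 'I_n) (ex : nat -> config n) :
  3 <= k -> 3 < n ->
  execution k l ex -> fair k ex ->
  forall t, stable k (ex t) ->
  forall v : 'I_n, connect (active (ex t)) l v /\ cst (ex t) v <> SF.
Proof.
move=> Hk _ [H0 Hs] _ t Hst v.
have HI : Inv k l (ex t).
  elim: t {Hst} => [|t IH]; last exact: Inv_step IH (Hs t).
  rewrite H0; split => /=.
  - by rewrite ffunE eqxx.
  - by move=> p q; rewrite ffunE.
  - by move=> w; rewrite ffunE; case: (eqVneq w l) => [->|] //.
  - move=> _; exists l; rewrite ffunE eqxx /=.
    by apply: leq_trans Hk.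
case: HI => Hl HE HC HU.
have HnF : forall w, cst (ex t) w <> SF.
  move=> w Hw; have [u Hu] := HU (ex_intro _ w Hw).
  have Huw : u != w by apply/eqP => E; move: Hu; rewrite E Hw.
  have := Hst u w Huw; rewrite Hw.
  case Hce: (ced (ex t) (u, w)).
    by have [_ ] := HE _ _ Hce.
  by move: Hu; case: (cst (ex t) u) => //= x ->.
by split; [apply: HC|]; apply: HnF.
Qed.
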